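(* Let $(X,d)$ be a compact metric space and let $f:X\to X$ be a homeomorphism. If $f$ possesses a wandering point, then ${\rm h_{pol}}(f)\ge1$.
   Context: A point $x$ is wandering for $f$ if there is a neighborhood $U$ of $x$ with $f^k(U)\cap U=\emptyset$ for all $k\ge1$. Polynomial entropy: with $d_n^f(x,y)=\max_{0\le k\le n-1}d(f^k(x),f^k(y))$ and $G_n^f(\varepsilon)$ the minimal number of $d_n^f$-balls of radius $\varepsilon$ covering $X$, ${\rm h_{pol}}(f)=\lim_{\varepsilon\to0}\limsup_{n\to\infty}\frac{\log G_n^f(\varepsilon)}{\log n}$. *)

(* Defs.v *)
From HB Require Import structures.
From mathcomp Require Import all_boot all_order all_algebra.
From mathcomp Require Import all_classical all_reals all_analysis.
Set Implicit Arguments. Unset Strict Implicit. Unset Printing Implicit Defensive.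
Import Order.TTheory GRing.Theory Num.Theory.
Import numFieldNormedType.Exports.
Local Open Scope classical_set_scope.
Local Open Scope ring_scope.

Section PolEnt.
Context {R : realType} {X : metricType R}.

Definition wandering (f : X -> X) (x : X) : Prop :=
  exists U : set X, nbhs x U /\
    forall k : nat, (1 <= k)%N -> (iter k f) @` U `&` U = set0.

Definition homeomorphism (f : X -> X) : Prop :=
  continuous f /\ exists g : X -> X,
    [/\ cancel f g, cancel g f & continuous g].

Definition dyn_dist (f : X -> X) (n : nat) (x y : X) : R :=
  \big[Num.max/0]_(k < n) mdist (iter k f x) (iter k f y).

Definition dyn_cover (f : X -> X) (n : nat) (eps : R) (s : seq X) : Prop :=
  forall y : X, exists2 c, c \in s & dyn_dist f n c y < eps.

(* G_n^f(eps): minimal number of d_n^f-balls of radius eps covering X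
   (0 by convention if no finite cover exists, which never happens for
    compact X) *)
Definition G_num (f : X -> X) (n : nat) (eps : R) : nat :=
  match pselect (exists k : nat, `[< exists s : seq X,
                   size s = k /\ dyn_cover f n eps s >]) with
  | left H => ex_minn H
  | right _ => 0%N
  end.

Definition hpol_eps (f : X -> X) (eps : R) : \bar R :=
  limn_esup (fun n : nat => ((ln (G_num f n eps)%:R) / ln n%:R)%:E).

Definition hpol (f : X -> X) : \bar R :=
  lim (hpol_eps f @ 0^'+).

End PolEnt.

(* Main.v *)
Require Import Defs.
From HB Require Import structures.
From mathcomp Require Import all_boot all_order all_algebra.
From mathcomp Require Import all_classical all_reals all_analysis.
Import Order.TTheory GRing.Theory Num.Theory.
Local Open Scope classical_set_scope.
Local Open Scope ring_scope.

Section Aux.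
Context {R : realType} {X : metricType R}.
Implicit Types (f g : X -> X).

Lemma iter_cont f k : continuous f -> continuous (iter k f).
Proof.
move=> cf; elim: k => [|k IH] x /=; first exact: cvg_id.
exact: (continuous_comp (IH x) (cf _)).
Qed.

Lemma dyn_le f n x y k : (k < n)%N ->
  mdist (iter k f x) (iter k f y) <= dyn_dist f n x y.
Proof.
move=> kn; rewrite /dyn_dist.
exact: (le_bigmax 0 (fun i : 'I_n => mdist (iter i f x) (iter i f y)) (Ordinal kn)).
Qed.

Lemma dyn_lt f n x y eps : 0 < eps ->
  (forall k, (k < n)%N -> mdist (iter k f x) (iter k f y) < eps) ->
  dyn_dist f n x y < eps.
Proof.
move=> e0 H; rewrite /dyn_dist; apply: bigmax_lt => // i _; exact: H.
Qed.

Lemma nbhs_dyn f n c eps : continuous f -> 0 < eps ->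
  nbhs c [set y | dyn_dist f n c y < eps].
Proof.
move=> cf e0.
have : \forall y \near c, forall k : 'I_n, mdist (iter k f c) (iter k f y) < eps.
  apply: filter_forall => k.
  have := iter_cont f k cf c.
  by move/metricType_numDomainType.cvgrPdist_lt => /(_ eps e0).
apply: filterS => y Hy /=; apply: dyn_lt => // k kn; exact: (Hy (Ordinal kn)).
Qed.

Lemma cover_exists f n eps : compact [set: X] -> continuous f -> 0 < eps ->
  exists s, dyn_cover f n eps s.
Proof.
move=> cX cf e0; apply: contrapT => Hno.
pose K (s : seq X) := [set y | forall c, c \in s -> ~ dyn_dist f n c y < eps].
pose F := fun A : set X => exists s, K s `<=` A.
have FF : Filter F.
  split.
  - by exists [::].
  - move=> A B [s1 H1] [s2 H2]; exists (s1 ++ s2) => y Ky; split.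
      by apply: H1 => c cs; apply: Ky; rewrite mem_cat cs.
    by apply: H2 => c cs; apply: Ky; rewrite mem_cat cs orbT.
  - by move=> A B AB [s Hs]; exists s => y /Hs /AB.
have PF : ProperFilter F.
  split => //; move=> [s Hs]; apply: Hno; exists s => y.
  have [//|Hn] := pselect (exists2 c, c \in s & dyn_dist f n c y < eps).
  exfalso; apply: (Hs y) => c cs lt; apply: Hn; by exists c.
have [p [_ clp]] := cX F PF (filterT).
have Fp : F (K [:: p]) by exists [:: p].
have [y [Ky Hy]] := clp _ _ Fp (nbhs_dyn f n p eps cf e0).
by apply: (Ky p); rewrite ?mem_head.
Qed.

Lemma G_spec f n eps : (exists s, dyn_cover f n eps s) ->
  (exists s, size s = G_num f n eps /\ dyn_cover f n eps s) /\
  (forall s, dyn_cover f n eps s -> (G_num f n eps <= size s)%N).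
Proof.
move=> [s0 Hs0]; rewrite /G_num; case: pselect => [H|H]; last first.
  by exfalso; apply: H; exists (size s0); apply/asboolP; exists s0.
case: ex_minnP => m /asboolP [s [sm cs]] minm; split; first by exists s.
move=> t ct; apply: minm; apply/asboolP; by exists t.
Qed.

Lemma iter_fg f g a b x : cancel g f ->
  iter (a + b) f (iter b g x) = iter a f x.
Proof.
move=> gK; elim: b => [|b IH]; first by rewrite addn0.
by rewrite addnS iterSr /= gK.
Qed.

Lemma sep_key f g x delta eps (w : X) i j n : cancel g f -> (i < j)%N -> (j < n)%N ->
  2 * eps <= delta ->
  (forall m, (1 <= m)%N -> delta <= mdist x (iter m f x)) ->
  dyn_dist f n w (iter i g x) < eps -> dyn_dist f n w (iter j g x) < eps -> False.
Proof.
move=> gK ij jn de Hd Hi Hj.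
have E1 : iter j f (iter i g x) = iter (j - i) f x by rewrite -(iter_fg f g (j - i) i x gK) subnK // ltnW.
have E2 : iter j f (iter j g x) = x by rewrite -{2}(add0n j) (iter_fg f g 0 j x gK).
have := Hd (j - i)%N; rewrite subn_gt0 => /(_ ij) H.
have T := metric_triangle x (iter j f w) (iter (j - i) f x).
have A1 : mdist x (iter j f w) < eps.
  rewrite metric_sym -{1}E2; exact: le_lt_trans (dyn_le _ _ _ _ _ jn) Hj.
have A2 : mdist (iter j f w) (iter (j - i) f x) < eps.
  rewrite -E1; exact: le_lt_trans (dyn_le _ _ _ _ _ jn) Hi.
have : mdist x (iter (j - i) f x) < 2 * eps.
  by rewrite mulr2n mulrDl mul1r; apply: le_lt_trans T _; exact: ltrD.
by rewrite ltNge (le_trans de H).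
Qed.

Lemma sep_lower f g n x delta eps : cancel g f -> 2 * eps <= delta ->
  (forall m, (1 <= m)%N -> delta <= mdist x (iter m f x)) ->
  forall s, dyn_cover f n eps s -> (n <= size s)%N.
Proof.
move=> gK de Hd s cs.
have Hc' : forall j : nat, exists c, c \in s /\ dyn_dist f n c (iter j g x) < eps.
  by move=> j; have [c ? ?] := cs (iter j g x); exists c.
have [c Hc] := choice Hc'.
have -> : n = size (map c (iota 0 n)) by rewrite size_map size_iota.
apply: uniq_leq_size; last first.
  by move=> y /mapP [j _ ->]; have [] := Hc j.
rewrite map_inj_in_uniq ?iota_uniq // => i j; rewrite !mem_iota !add0n => /andP [_ i_n] /andP [_ j_n] cij.
have [ij|ji|//] := ltngtP i j.
- exfalso; have [_ Hi] := Hc i; have [_ Hj] := Hc j; rewrite cij in Hi.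
  exact: (sep_key _ _ _ _ _ _ _ _ _ gK ij j_n de Hd Hi Hj).
- exfalso; have [_ Hi] := Hc i; have [_ Hj] := Hc j; rewrite cij in Hi.
  exact: (sep_key _ _ _ _ _ _ _ _ _ gK ji i_n de Hd Hj Hi).
Qed.

Lemma limsup_ge1 (u : nat -> R) :
  (forall n, (2 <= n)%N -> 1 <= u n) -> (1 <= limn_esup (fun n => (u n)%:E))%E.
Proof.
move=> H; rewrite /limn_esup /limf_esup.
apply: le_ereal_inf_tmp => _ [V [N _ HN] <-].
apply: le_ereal_sup_tmp; exists (u (maxn N 2))%:E.
  by exists (maxn N 2) => //; apply: HN; rewrite /= leq_maxl.
by rewrite lee_fin; apply: H; rewrite leq_maxr.
Qed.

Lemma limsup_le (u v : nat -> R) :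
  (forall n, u n <= v n) ->
  (limn_esup (fun n => (u n)%:E) <= limn_esup (fun n => (v n)%:E))%E.
Proof.
move=> H; rewrite /limn_esup /limf_esup.
apply: le_ereal_inf_tmp => _ [V HV <-].
apply: le_trans (ereal_inf_lbound _) _; first by exists V.
apply: ge_ereal_sup => _ [n Vn <-].
apply: le_trans (ereal_sup_ubound _); last by exists n.
by rewrite lee_fin.
Qed.

Lemma ln_nat_ge0 (n : nat) : 0 <= ln (n%:R : R).
Proof.
case: n => [|n]; first by rewrite ln0.
by apply: ln_ge0; rewrite ler1n.
Qed.

Lemma ratio_ge1 (n G : nat) : (2 <= n)%N -> (n <= G)%N ->
  1 <= ln (G%:R : R) / ln n%:R.
Proof.
move=> n2 nG.
have lnp : 0 < ln (n%:R : R) by apply: ln_gt0; rewrite ltr1n.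
rewrite ler_pdivlMr // mul1r ler_ln ?ler_nat //; rewrite posrE ltr0n.
  by apply: leq_trans n2.
by apply: leq_trans nG; apply: leq_trans n2.
Qed.

Lemma ratio_le (n a b : nat) : (1 <= a)%N -> (a <= b)%N ->
  ln (a%:R : R) / ln n%:R <= ln (b%:R : R) / ln n%:R.
Proof.
move=> a1 ab; apply: ler_wpM2r; first by rewrite invr_ge0 ln_nat_ge0.
rewrite ler_ln ?ler_nat // posrE ltr0n //; exact: leq_trans ab.
Qed.

End Aux.

Theorem proposition2p1 (R : realType) (X : metricType R) (f : X -> X) :
  compact [set: X] -> homeomorphism f ->
  (exists x : X, wandering f x) ->
  (1 <= hpol f)%E.
Proof.
move=> cX [cf [g [fK gK cg]]] [x [U [nU HU]]].
have [d d0 dU] : exists2 d : R, 0 < d & forall y, mdist x y < d -> U y.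
  move: nU; rewrite -metricType_numDomainType.filter_from_mdist_nbhs.
  by move=> [d d0 dU]; exists d.
have Hd : forall m, (1 <= m)%N -> d <= mdist x (iter m f x).
  move=> m m1; rewrite leNgt; apply/negP => lt.
  have := HU m m1; rewrite -subset0 => /(_ (iter m f x)); apply; split.
    by exists x => //; apply: nbhs_singleton.
  exact: dU.
have covs : forall n e, 0 < e -> exists s, dyn_cover f n e s.
  by move=> n e e0; exact: cover_exists.
have Gpos : forall n e, 0 < e -> (1 <= G_num f n e)%N.
  move=> n e e0; have [[s [<- cs]] _] := G_spec _ _ _ (covs n e e0).
  by have [c cin _] := cs x; case: s cin cs.
have Gmono : forall n e1 e2, 0 < e1 -> e1 <= e2 -> (G_num f n e2 <= G_num f n e1)%N.
  move=> n e1 e2 e10 e12.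
  have [[s [<- cs]] _] := G_spec _ _ _ (covs n e1 e10).
  have [_ ] := G_spec _ _ _ (covs n e2 (lt_le_trans e10 e12)); apply => y.
  by have [c cin lt] := cs y; exists c => //; apply: lt_le_trans e12.
pose e0 := d / 2.
have e0p : 0 < e0 by rewrite divr_gt0.
have ge1 : (1 <= hpol_eps f e0)%E.
  apply: limsup_ge1 => n n2; apply: ratio_ge1 => //.
  have [[s [<- cs]] _] := G_spec _ _ _ (covs n e0 e0p).
  apply: (sep_lower _ _ _ _ _ _ gK _ Hd _ cs).
  by rewrite /e0 mulrC divfK // pnatr_eq0.
have mono : {in Interval (BRight (0:R)) (BInfty R false) &,
    {homo hpol_eps f : a b / a <= b >-> (b <= a)%E}}.
  move=> a b; rewrite !in_itv /= !andbT => a0 b0 ab.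
  apply: limsup_le => n; apply: ratio_le; first exact: Gpos.
  exact: Gmono.
have cv := @nonincreasing_at_right_cvge R (hpol_eps f) 0 (BInfty R false) isT mono.
rewrite /hpol (cvg_lim _ cv); last exact: ereal_hausdorff.
apply: le_trans ge1 (ereal_sup_ubound _).
by exists e0 => //=; rewrite in_itv /= andbT.
Qed.
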